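(* Let $P=MN_P$ be a standard parabolic subgroup, $\pi\in\Pi_{\mathrm{disc}}(M)$, $R$ a standard parabolic subgroup and $w\in{}_RW_P$. Let $Q$ be standard with $P_0\subset Q\subset R$ and $w'\in{}_QW^R_{R_w}\,w$ with $P_\pi\subset P_{w'}$. (1) For every $\varpi^\vee\in\hat\Delta_Q^{R,\vee}$, $\langle w'\nu^w_{w'},\varpi^\vee\rangle\le0$, with equality if and only if $\varpi^\vee\in w'\mathfrak a^G_{P_w}$. (2) The following are equivalent: (a) $P_w=P_{w'}$; (b) $(w'\nu^w_{w'})^R_Q=0$; (c) $w'\in W^R(R_w;Q)\,w$. (3) There exists $c_1>0$ such that for every $T\in\mathfrak a_0$ with $\langle\alpha,T\rangle\ge0$ for all $\alpha\in\Delta_0$, every standard $P_0\subset Q\subset R$ and every $w'\in{}_QW^R_{R_w}w\setminus W^R(R_w;Q)w$ with $P_\pi\subset P_{w'}$, one has $\langle(w'\nu^w_{w'})^R_Q,T\rangle\le-c_1d(T)$.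
   Context: $E/F$ is a quadratic extension of number fields, $G=\mathrm{Res}_{E/F}\mathrm{GL}_n$, $P_0$ the upper triangular Borel, $W\cong\mathfrak S_n$, $\mathfrak a_0\cong\mathbb R^n$ with standard inner product; $\Delta_0$ the simple roots, $d(T)=\min_{\alpha\in\Delta_0}\langle\alpha,T\rangle$. For standard $Q\subset R$: $\mathfrak a_Q^R=\mathfrak a_Q\cap\mathfrak a_0^R$, $\Delta_Q^R$ simple roots of $A_Q$ in $M_R\cap N_Q$, $\hat\Delta_Q^{R,\vee}$ the dual basis of $\mathfrak a_Q^R$; $\mu\mapsto\mu^R_Q$ is the orthogonal projection $\mathfrak a_0^*\to\mathfrak a_Q^{R,*}$. For standard $S,Q$: ${}_QW_S$ is the set of $w\in W$ with $M_S\cap w^{-1}P_0w=M_S\cap P_0$, $M_Q\cap wP_0w^{-1}=M_Q\cap P_0$, $S_w=(M_S\cap w^{-1}Qw)N_S$, $Q_w=(M_Q\cap wSw^{-1})N_Q$; superscript $R$ denotes the analogous objects for $M_R$ (Weyl group $W^R$); $W^R(S;Q)$ is the set of $w\in{}_QW^R_S$ with $M_S\subset w^{-1}M_Qw$. Here $R_w=(M_R\cap wPw^{-1})N_R$; for $w'$ as in the claim, $w'\in{}_QW_P$ and $P_{w'}\subset P_w\subset P$ (with $P_{w'}=(M\cap w'^{-1}Qw')N_P$). $\Pi_{\mathrm{disc}}(M)$: discrete automorphic representations with central character trivial on $A_M^\infty$; writing $M=\prod G_{n_i}$, $\pi=\boxtimes\pi_i$, Moeglin–Waldspurger gives $n_i=r_id_i$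 with $\pi_i$ the residual representation attached to $\sigma_i^{\otimes d_i}$, $\sigma_i$ cuspidal on $\mathrm{GL}_{r_i}$ over $E$; $P_\pi\subset P$ is the standard parabolic with $P_\pi\cap M=\prod P_{\pi_i}$, $P_{\pi_i}$ with Levi $\mathrm{GL}_{r_i}^{d_i}$. For $P_\pi\subset S\subset S'\subset P$, with $S\cap M=\prod S_i$, $S'\cap M=\prod S'_i$, $\nu_S^{S'}=(-\rho_{S_i}^{S'_i}/r_i)_i$. Then $\nu^w_{w'}=\nu^{P_w}_{P_{w'}}$. *)

(* Defs.v *)
(* Combinatorial model of G = Res_{E/F} GL_{n+1}:
   coordinates 'I_n.+1 of a_0 = K^(n+1) (standard inner product),
   simple roots alpha_i = e_i - e_{i+1} indexed by i : 'I_n,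
   standard parabolic S  <->  D_S : {set 'I_n}, the simple roots of M_S,
   W = S_{n+1} = {perm 'I_n.+1}, acting by (w x)_{w j} = x_j. *)
From HB Require Import structures.
From mathcomp Require Import all_boot all_order all_algebra all_fingroup.
Set Implicit Arguments. Unset Strict Implicit. Unset Printing Implicit Defensive.
Import Order.TTheory GRing.Theory Num.Theory.
Local Open Scope ring_scope.

Section Defs.
Variable K : realFieldType.
Variable n : nat.

Definition vec := {ffun 'I_n.+1 -> K}.

(* endpoints of the simple root alpha_i = e_i - e_{i+1} *)
Definition lo (i : 'I_n) : 'I_n.+1 := widen_ord (leqnSn n) i.
Definition hi (i : 'I_n) : 'I_n.+1 := lift ord0 i.

(* a and b lie in the same diagonal block of M_D, i.e. e_a - e_b is a root of M_D *)
Definition sameblk (D : {set 'I_n}) (a b : 'I_n.+1) : bool :=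
  [forall i : 'I_n, ((minn a b <= i)%N && (i < maxn a b)%N) ==> (i \in D)].

Definition eb (a : 'I_n.+1) : vec := [ffun j => (j == a)%:R].
Definition alpha (i : 'I_n) : vec := eb (lo i) - eb (hi i).
Definition dot (x y : vec) : K := \sum_j x j * y j.

Definition wact (w : {perm 'I_n.+1}) (x : vec) : vec := [ffun j => x ((w^-1)%g j)].

(* w \in _Q W_S : w maps positive roots of M_S to positive roots,
   w^-1 maps positive roots of M_Q to positive roots *)
Definition Wdc (Q S : {set 'I_n}) (w : {perm 'I_n.+1}) : bool :=
  [forall a : 'I_n.+1, forall b : 'I_n.+1, ((a < b)%N && sameblk S a b) ==> (w a < w b)%N] &&
  [forall a : 'I_n.+1, forall b : 'I_n.+1, ((a < b)%N && sameblk Q a b) ==> ((w^-1)%g a < (w^-1)%g b)%N].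

(* the standard parabolic (M_S \cap w^-1 M_Q w) N_S  (i.e. S_w relative to Q) *)
Definition paraw (S Q : {set 'I_n}) (w : {perm 'I_n.+1}) : {set 'I_n} :=
  [set i in S | sameblk Q (w (lo i)) (w (hi i))].

Definition inWR (R : {set 'I_n}) (u : {perm 'I_n.+1}) : bool :=
  [forall a : 'I_n.+1, sameblk R a (u a)].

Definition WdcR (R Q S : {set 'I_n}) (u : {perm 'I_n.+1}) : bool :=
  inWR R u && Wdc Q S u.

(* W^R(S;Q) : u \in _Q W^R_S with M_S \subset u^-1 M_Q u *)
Definition WRSQ (R S Q : {set 'I_n}) (u : {perm 'I_n.+1}) : bool :=
  WdcR R Q S u && [forall a : 'I_n.+1, forall b : 'I_n.+1, sameblk S a b ==> sameblk Q (u a) (u b)].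

(* w' \in X w  (product u w of Weyl elements: first w, then u) *)
Definition rightmul (X : pred {perm 'I_n.+1}) (w w' : {perm 'I_n.+1}) : Prop :=
  exists2 u, X u & forall a, w' a = u (w a).

(* combinatorial data of pi \in Pi_disc(M): P_pi (simple roots Dpi) and the
   function r (r a = r_i for coordinates a in the i-th block of M):
   P_pi \subset P, r constant on the blocks of M, and every block of M_{P_pi}
   inside the i-th block of M has size r_i. *)
Definition disc_data (P Dpi : {set 'I_n}) (r : 'I_n.+1 -> nat) : Prop :=
  [/\ Dpi \subset P,
      (forall a b, sameblk P a b -> r a = r b) &
      (forall a, #|[set b | sameblk Dpi a b]| = r a)].

(* rho_S^{S'} : half sum of positive roots in M_{S'} \cap N_S *)
Definition rho (S S' : {set 'I_n}) : vec :=
  [ffun j => 2^-1 * (\sum_(a : 'I_n.+1) \sum_(b : 'I_n.+1 | [&& (a < b)%N, sameblk S' a b & ~~ sameblk S a b])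
      (eb a - eb b)) j].

(* nu_S^{S'} = (- rho_{S_i}^{S'_i} / r_i)_i *)
Definition nu (r : 'I_n.+1 -> nat) (S S' : {set 'I_n}) : vec :=
  [ffun j => - rho S S' j / (r j)%:R].

(* a_Q^R = a_Q \cap a_0^R *)
Definition in_aQR (Q R : {set 'I_n}) (x : vec) : Prop :=
  (forall a b, sameblk Q a b -> x a = x b) /\
  (forall a, \sum_(b | sameblk R a b) x b = 0).

(* x is an element of the basis \hat\Delta_Q^{R,\vee} dual to \Delta_Q^R *)
Definition is_coweight (Q R : {set 'I_n}) (x : vec) : Prop :=
  exists2 i, i \in R :\: Q &
    in_aQR Q R x /\ (forall j, j \in R :\: Q -> dot (alpha j) x = (i == j)%:R).

Definition in_w_aG (S : {set 'I_n}) (w : {perm 'I_n.+1}) (x : vec) : Prop :=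
  exists2 y : vec, (forall a b, sameblk S a b -> y a = y b) /\ \sum_a y a = 0
                   & x = wact w y.

(* orthogonal projection a_0 -> a_Q^R (for Q \subset R):
   average over the Q-block minus average over the R-block *)
Definition avg (D : {set 'I_n}) (x : vec) (j : 'I_n.+1) : K :=
  (\sum_(k | sameblk D j k) x k) / (#|[set k | sameblk D j k]|)%:R.
Definition proj (Q R : {set 'I_n}) (x : vec) : vec :=
  [ffun j => avg Q x j - avg R x j].

Definition dominant (T : vec) : Prop := forall i, 0 <= dot (alpha i) T.

End Defs.

(* d(T) = min_{alpha \in Delta_0} <alpha, T>; convention d(T) = 0 when Delta_0 is empty (GL_1) *)
Definition dmin (K : realFieldType) (n : nat) : vec K n -> K :=
  match n return vec K n -> K with
  | 0 => fun _ => 0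
  | m.+1 => fun T => \big[Num.min/ dot (@alpha K m.+1 ord0) T]_(i < m.+1) dot (@alpha K m.+1 i) T
  end.

(* Main.v *)
Require Import Defs.
From HB Require Import structures.
From mathcomp Require Import all_boot all_order all_algebra all_fingroup.
From mathcomp Require Import zify ring lra.
Set Implicit Arguments. Unset Strict Implicit. Unset Printing Implicit Defensive.
Import Order.TTheory GRing.Theory Num.Theory.

Section Comb.
Variable n : nat.
Local Notation idx := ('I_n.+1).

Lemma sbP (D : {set 'I_n}) (a b : idx) :
  reflect (forall i : 'I_n, (minn a b <= i < maxn a b)%N -> i \in D) (sameblk D a b).
Proof.
apply: (iffP forallP) => H i; first by move=> Hi; exact: (implyP (H i) Hi).
by apply/implyP => Hi; exact: H.
Qed.

Lemma sbC (D : {set 'I_n}) a b : sameblk D a b = sameblk D b a.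
Proof. by rewrite /sameblk minnC maxnC. Qed.

Lemma sbS (D : {set 'I_n}) a b : sameblk D a b -> sameblk D b a.
Proof. by rewrite sbC. Qed.

Lemma sbxx (D : {set 'I_n}) a : sameblk D a a.
Proof. apply/sbP => i; lia. Qed.

Lemma sb_sub (D : {set 'I_n}) (a b c d : idx) :
  (minn a b <= minn c d)%N -> (maxn c d <= maxn a b)%N -> sameblk D a b -> sameblk D c d.
Proof. move=> h1 h2 /sbP H; apply/sbP => i Hi; apply: H; lia. Qed.

Lemma sbT (D : {set 'I_n}) a b c : sameblk D a b -> sameblk D b c -> sameblk D a c.
Proof.
move=> /sbP H1 /sbP H2; apply/sbP => i Hi.
case: (boolP ((minn a b <= i < maxn a b)%N)) => h; first exact: H1.
apply: H2; lia.
Qed.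

Lemma sb_mono (D D' : {set 'I_n}) a b : D \subset D' -> sameblk D a b -> sameblk D' a b.
Proof. move=> /subsetP s /sbP H; apply/sbP => i Hi; exact/s/H. Qed.

Lemma val_lo (j : 'I_n) : (lo j : nat) = j. Proof. by []. Qed.
Lemma val_hi (j : 'I_n) : (hi j : nat) = j.+1. Proof. by rewrite /hi /= /bump leq0n. Qed.

Lemma lo_inord (j : 'I_n) : lo j = inord j.
Proof. apply: val_inj; rewrite /= inordK //; have := ltn_ord j; lia. Qed.
Lemma hi_inord (j : 'I_n) : hi j = inord j.+1.
Proof. apply: val_inj; rewrite /= /bump /= inordK //; have := ltn_ord j; lia. Qed.

Lemma sb_lohi (D : {set 'I_n}) (j : 'I_n) : sameblk D (lo j) (hi j) = (j \in D).
Proof.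
apply/sbP/idP => [H|Hj i]; first by apply: H; rewrite val_lo val_hi; lia.
rewrite val_lo val_hi => Hi.
have -> : i = j by apply: val_inj => /=; lia.
exact: Hj.
Qed.

Lemma sb_chain (D : {set 'I_n}) (E : idx -> idx -> Prop) :
  (forall a, E a a) ->
  (forall a b c : idx, (a <= b <= c)%N -> E a b -> E b c -> E a c) ->
  (forall x : 'I_n, x \in D -> E (lo x) (hi x)) ->
  forall a b : idx, (a <= b)%N -> sameblk D a b -> E a b.
Proof.
move=> Er Et Es.
suff H : forall k (a b : idx), (b : nat) = (a + k)%N -> sameblk D a b -> E a b.
  move=> a b ab; apply: (H (b - a)%N); lia.
elim=> [|k IH] a b hb sab.
  by have -> : b = a by apply: val_inj => /=; rewrite hb addn0.
have hc : (b.-1 < n.+1)%N by have := ltn_ord b; lia.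
have hx : (b.-1 < n)%N by have := ltn_ord b; lia.
pose c : idx := Ordinal hc.
pose x : 'I_n := Ordinal hx.
have Eac : E a c.
  apply: IH => /=; first lia.
  apply: sb_sub sab => /=; lia.
have xD : x \in D by move/sbP: sab; apply => /=; lia.
have Ecb : E c b.
  have -> : c = lo x by apply: val_inj.
  have -> : b = hi x by apply: val_inj; have := val_hi x; rewrite /= => ->; lia.
  exact: Es.
apply: (Et a c b) => //=; lia.
Qed.

Lemma sb_chain_sym (D : {set 'I_n}) (E : idx -> idx -> Prop) :
  (forall a, E a a) -> (forall a b, E a b -> E b a) ->
  (forall a b c, E a b -> E b c -> E a c) ->
  (forall x : 'I_n, x \in D -> E (lo x) (hi x)) ->
  forall a b : idx, sameblk D a b -> E a b.
Proof.
move=> Er Es Et St a b sab.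
have Et' : forall a b c : idx, (a <= b <= c)%N -> E a b -> E b c -> E a c.
  by move=> ? ? ? _; apply: Et.
case: (leqP a b) => ab; first exact: (sb_chain Er Et' St).
apply: Es; apply: (sb_chain Er Et' St); first exact: ltnW.
by rewrite sbC.
Qed.

End Comb.

Section Perm.
Variable n : nat.
Local Notation idx := ('I_n.+1).

Lemma Wdc_inc (Q S : {set 'I_n}) (s : {perm idx}) : Wdc Q S s ->
  forall a b : idx, (a < b)%N -> sameblk S a b -> (s a < s b)%N.
Proof. by case/andP => /forallP H _ a b ab sab; move/forallP: (H a) => /(_ b) /implyP; apply; rewrite ab. Qed.

Lemma Wdc_incV (Q S : {set 'I_n}) (s : {perm idx}) : Wdc Q S s ->
  forall a b : idx, (a < b)%N -> sameblk Q a b -> ((s^-1)%g a < (s^-1)%g b)%N.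
Proof. by case/andP => _ /forallP H a b ab sab; move/forallP: (H a) => /(_ b) /implyP; apply; rewrite ab. Qed.

Lemma consec (D1 D2 : {set 'I_n}) (s : {perm idx}) :
  (forall a b : idx, (a < b)%N -> sameblk D1 a b -> (s a < s b)%N) ->
  (forall a b : idx, (a < b)%N -> sameblk D2 a b -> ((s^-1)%g a < (s^-1)%g b)%N) ->
  forall j : 'I_n, j \in D1 -> sameblk D2 (s (lo j)) (s (hi j)) ->
  (s (hi j) : nat) = (s (lo j)).+1.
Proof.
move=> i1 i2 j jD sD.
have lt : (s (lo j) < s (hi j))%N by apply: i1; [rewrite val_lo val_hi | rewrite sb_lohi].
case: (ltnP (s (lo j)).+1 (s (hi j))) => h; last lia.
have hz : ((s (lo j)).+1 < n.+1)%N by have := ltn_ord (s (hi j)); lia.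
pose z : idx := Ordinal hz.
have h1 : (lo j < (s^-1)%g z)%N.
  have := i2 (s (lo j)) z; rewrite permK; apply => /=; first lia.
  apply: sb_sub sD => /=; lia.
have h2 : ((s^-1)%g z < hi j)%N.
  have := i2 z (s (hi j)); rewrite permK; apply => /=; first lia.
  apply: sb_sub sD => /=; lia.
move: h1 h2; rewrite val_lo val_hi; lia.
Qed.

Variables (P R Q : {set 'I_n}) (w u w' : {perm idx}).
Hypotheses (hW : Wdc R P w) (hu : WdcR R Q (paraw R P (w^-1)%g) u)
  (hw' : forall a, w' a = u (w a)) (QR : Q \subset R).
Local Notation Rw := (paraw R P (w^-1)%g).
Local Notation Pw := (paraw P R w).
Local Notation Sw := (paraw P Q w').

Lemma incw : forall a b : idx, (a < b)%N -> sameblk P a b -> (w a < w b)%N.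
Proof. exact: Wdc_inc hW. Qed.
Lemma incwi : forall a b : idx, (a < b)%N -> sameblk R a b -> ((w^-1)%g a < (w^-1)%g b)%N.
Proof. exact: Wdc_incV hW. Qed.
Lemma uR a : sameblk R a (u a).
Proof. by case/andP: hu => /forallP. Qed.
Lemma incu : forall a b : idx, (a < b)%N -> sameblk Rw a b -> (u a < u b)%N.
Proof. by case/andP: hu => _; apply: Wdc_inc. Qed.
Lemma uRR x y : sameblk R x y -> sameblk R (u x) (u y).
Proof. move=> h; exact: (sbT (sbS (uR x)) (sbT h (uR y))). Qed.
Lemma uRR' x y : sameblk R (u x) (u y) -> sameblk R x y.
Proof. move=> h; exact: (sbT (uR x) (sbT h (sbS (uR y)))). Qed.

Lemma inPw j : (j \in Pw) = (j \in P) && sameblk R (w (lo j)) (w (hi j)).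
Proof. by rewrite inE. Qed.
Lemma inRw x : (x \in Rw) = (x \in R) && sameblk P ((w^-1)%g (lo x)) ((w^-1)%g (hi x)).
Proof. by rewrite inE. Qed.
Lemma inSw j : (j \in Sw) = (j \in P) && sameblk Q (w' (lo j)) (w' (hi j)).
Proof. by rewrite inE. Qed.

Lemma Pw_Rw j : j \in Pw -> exists x : 'I_n, [/\ x \in Rw, lo x = w (lo j) & hi x = w (hi j)].
Proof.
move=> jP; move: (jP); rewrite inPw => /andP [jP' sR].
have hc := consec incw incwi jP' sR.
have hx : (w (lo j) < n)%N by have := ltn_ord (w (hi j)); lia.
pose x : 'I_n := Ordinal hx.
have e1 : lo x = w (lo j) by apply: val_inj.
have e2 : hi x = w (hi j) by apply: val_inj; have := val_hi x; rewrite /= => ->; rewrite hc.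
exists x; split => //.
by rewrite inRw -sb_lohi e1 e2 sR !permK sb_lohi.
Qed.

Lemma Rw_Pw x : x \in Rw -> exists j : 'I_n, [/\ j \in Pw, w (lo j) = lo x & w (hi j) = hi x].
Proof.
rewrite inRw => /andP [xR sP].
have i2 : forall a b : idx, (a < b)%N -> sameblk P a b -> (((w^-1)^-1)%g a < ((w^-1)^-1)%g b)%N.
  by rewrite invgK; exact: incw.
have hc := consec incwi i2 xR sP.
have hx : ((w^-1)%g (lo x) < n)%N by have := ltn_ord ((w^-1)%g (hi x)); lia.
pose j : 'I_n := Ordinal hx.
have e1 : lo j = (w^-1)%g (lo x) by apply: val_inj.
have e2 : hi j = (w^-1)%g (hi x) by apply: val_inj; have := val_hi j; rewrite /= => ->; rewrite hc.
exists j; rewrite e1 e2 !permKV; split => //.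
by rewrite inPw -sb_lohi e1 e2 sP !permKV sb_lohi.
Qed.

Lemma w'_step j : j \in Pw -> (w' (lo j) < w' (hi j))%N.
Proof.
case/Pw_Rw => x [xR e1 e2]; rewrite !hw' -e1 -e2; apply: incu; first by rewrite val_lo val_hi.
by rewrite sb_lohi.
Qed.

Lemma w'_inc : forall a b : idx, (a <= b)%N -> sameblk Pw a b -> (w' a <= w' b)%N.
Proof.
apply: sb_chain => //.
- by move=> a b c _; apply: leq_trans.
- by move=> x /w'_step /ltnW.
Qed.

Lemma w'_lt (a b : idx) : (a < b)%N -> sameblk Pw a b -> (w' a < w' b)%N.
Proof.
move=> ab sab; have := w'_inc (ltnW ab) sab; rewrite leq_eqVlt => /orP [/eqP e|//].
have /perm_inj ab' : w' a = w' b by apply: val_inj.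
by move: ab; rewrite ab' ltnn.
Qed.

Lemma w'_R : forall a b : idx, sameblk Pw a b -> sameblk R (w' a) (w' b).
Proof.
apply: sb_chain_sym.
- by move=> a; exact: sbxx.
- by move=> a b; rewrite sbC.
- by move=> a b c; apply: sbT.
- by move=> x; rewrite inPw !hw' => /andP [_ /uRR].
Qed.

Lemma Sw_Q : forall a b : idx, sameblk Sw a b -> sameblk Q (w' a) (w' b).
Proof.
apply: sb_chain_sym.
- by move=> a; exact: sbxx.
- by move=> a b; rewrite sbC.
- by move=> a b c; apply: sbT.
- by move=> x; rewrite inSw => /andP [].
Qed.

Lemma Sw_sub : Sw \subset Pw.
Proof.
apply/subsetP => j; rewrite inSw inPw => /andP [jP sQ]; rewrite jP /=.
by apply: uRR'; rewrite -!hw'; apply: sb_mono QR sQ.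
Qed.

Lemma Pw_subP : Pw \subset P.
Proof. by apply/subsetP => j; rewrite inPw => /andP []. Qed.

End Perm.

Local Open Scope ring_scope.

Section Alg.
Variable K : realFieldType.
Variable n : nat.
Local Notation idx := ('I_n.+1).
Local Notation vec := (vec K n).

Definition Sx (x : vec) (i : 'I_n) : K := \sum_(k : idx | (k <= i)%N) x k.
Definition ind (i : 'I_n) : vec := [ffun k : idx => ((k <= i)%N)%:R].
Definition avgv (D : {set 'I_n}) (x : vec) : vec := [ffun j => avg D x j].

Lemma sum_pick (F : idx -> K) a : \sum_j F j * ((j == a)%:R) = F a.
Proof.
rewrite (bigD1 a) //= eqxx mulr1 big1 ?addr0 // => j /negbTE ->; by rewrite mulr0.
Qed.

Lemma dot_alpha i (y : vec) : dot (alpha K i) y = y (lo i) - y (hi i).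
Proof.
rewrite /dot /alpha.
under eq_bigr do rewrite !ffunE mulrBl.
rewrite sumrB.
under eq_bigr do rewrite mulrC.
rewrite sum_pick.
under eq_bigr do rewrite mulrC.
by rewrite sum_pick.
Qed.

Lemma pairsum (C : rel idx) (F : idx -> K) :
  \sum_j F j * (\sum_a \sum_(b | C a b) (eb K a - eb K b)) j =
  \sum_a \sum_(b | C a b) (F a - F b).
Proof.
under eq_bigr do rewrite sum_ffunE mulr_sumr.
rewrite exchange_big /=; apply: eq_bigr => a _.
under eq_bigr do rewrite sum_ffunE mulr_sumr.
rewrite exchange_big /=; apply: eq_bigr => b _.
under eq_bigr do rewrite !ffunE mulrBr.
by rewrite sumrB !sum_pick.
Qed.

Lemma abel (x y : vec) :
  dot x y = \sum_(i : 'I_n) Sx x i * (y (lo i) - y (hi i)) + (\sum_k x k) * y ord_max.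
Proof.
have E : forall k : idx, \sum_(i : 'I_n | (k <= i)%N) (y (lo i) - y (hi i)) = y k - y ord_max.
  move=> k; pose g m := y (inord m).
  have e : forall i : 'I_n, y (lo i) - y (hi i) = - (g i.+1 - g i).
    by move=> i; rewrite /g opprB lo_inord hi_inord.
  under eq_bigr do rewrite e.
  rewrite sumrN.
  have -> : \sum_(i < n | (k <= i)%N) (g i.+1 - g i) = \sum_(k <= i < n) (g i.+1 - g i).
    by rewrite big_geq_mkord.
  rewrite telescope_sumr; last by have := ltn_ord k; lia.
  rewrite opprB /g inord_val; congr (_ - y _); apply: val_inj; by rewrite /= inordK.
rewrite /Sx.
under eq_bigr do rewrite big_mkcond mulr_suml.
have Hk : forall k : idx, \sum_(i < n) (if (k <= i)%N then x k else 0) * (y (lo i) - y (hi i)) + x k * y ord_max = x k * y k.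
  move=> k; have -> : \sum_(i < n) (if (k <= i)%N then x k else 0) * (y (lo i) - y (hi i)) = x k * (y k - y ord_max).
    rewrite -(E k) mulr_sumr [RHS]big_mkcond; apply: eq_bigr => i _; case: ifP => _; by rewrite ?mul0r ?mulr0.
  by rewrite mulrBr subrK.
rewrite exchange_big /= mulr_suml -big_split /=.
under eq_bigr do rewrite Hk.
by [].
Qed.


Definition bc (D : {set 'I_n}) (a : idx) : K := (#|[set k | sameblk D a k]|)%:R.

Lemma blk_eq (D : {set 'I_n}) a b : sameblk D a b -> [set k | sameblk D a k] = [set k | sameblk D b k].
Proof.
move=> sab; apply/setP => k; rewrite !inE; apply/idP/idP => h.
- exact: sbT (sbS sab) h.
- exact: sbT sab h.
Qed.

Lemma bc_eq (D : {set 'I_n}) a b : sameblk D a b -> bc D a = bc D b.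
Proof. by move=> sab; rewrite /bc (blk_eq sab). Qed.

Lemma bc_gt0 (D : {set 'I_n}) a : 0 < bc D a.
Proof.
rewrite /bc ltr0n card_gt0; apply/set0Pn; exists a; by rewrite inE sbxx.
Qed.

Lemma avgE (D : {set 'I_n}) (x : vec) a : avg D x a = (\sum_(k | sameblk D a k) x k) / bc D a.
Proof. by []. Qed.

Lemma sum_blk (D : {set 'I_n}) a (F : idx -> K) :
  \sum_(k | sameblk D a k) F k = \sum_(k in [set k | sameblk D a k]) F k.
Proof. by apply: eq_bigl => k; rewrite inE. Qed.

Lemma avg_eq (D : {set 'I_n}) (x : vec) a b : sameblk D a b -> avg D x a = avg D x b.
Proof.
move=> sab; rewrite !avgE (bc_eq sab) !sum_blk (blk_eq sab) //.
Qed.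

Lemma avg_const (D : {set 'I_n}) (x : vec) a c :
  (forall l, sameblk D a l -> x l = c) -> avg D x a = c.
Proof.
move=> h; rewrite avgE (eq_bigr (fun _ => c)) // sum_blk sumr_const -mulr_natr.
by rewrite -/(bc D a) mulfK // gt_eqF // bc_gt0.
Qed.

Lemma avg_ge (D : {set 'I_n}) (x : vec) a c :
  (forall l, sameblk D a l -> c <= x l) -> c <= avg D x a.
Proof.
move=> h; rewrite avgE ler_pdivlMr ?bc_gt0 //.
have -> : c * bc D a = \sum_(k | sameblk D a k) c.
  by rewrite sum_blk sumr_const -mulr_natr.
exact: ler_sum.
Qed.

Lemma avg_le (D : {set 'I_n}) (x : vec) a c :
  (forall l, sameblk D a l -> x l <= c) -> avg D x a <= c.
Proof.
move=> h; rewrite avgE ler_pdivrMr ?bc_gt0 //.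
have -> : c * bc D a = \sum_(k | sameblk D a k) c.
  by rewrite sum_blk sumr_const -mulr_natr.
exact: ler_sum.
Qed.

Lemma dot_avg (D : {set 'I_n}) (x y : vec) : dot (avgv D x) y = dot x (avgv D y).
Proof.
have L : forall j : idx, avgv D x j * y j = \sum_k (if sameblk D j k then x k * y j / bc D j else 0).
  move=> j; rewrite ffunE avgE mulr_suml mulr_suml [LHS]big_mkcond; apply: eq_bigr => k _.
  by case: ifP => _; [rewrite mulrAC | rewrite ?mul0r ?mulr0].
have Rr : forall k : idx, x k * avgv D y k = \sum_j (if sameblk D k j then x k * y j / bc D k else 0).
  move=> k; rewrite ffunE avgE mulrA mulr_sumr mulr_suml [LHS]big_mkcond; apply: eq_bigr => j _.
  by case: ifP.
rewrite /dot.
under eq_bigr do rewrite L.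
under [RHS]eq_bigr do rewrite Rr.
rewrite [RHS]exchange_big; apply: eq_bigr => j _; apply: eq_bigr => k _.
rewrite [sameblk D k j]sbC; case: ifP => // h.
by rewrite (bc_eq h).
Qed.

Lemma proj_eq (Q R : {set 'I_n}) (x : vec) : proj Q R x = avgv Q x - avgv R x.
Proof. by apply/ffunP => j; rewrite !ffunE. Qed.

Lemma dotBl (x y z : vec) : dot (x - y) z = dot x z - dot y z.
Proof. by rewrite /dot -sumrB; apply: eq_bigr => j _; rewrite !ffunE mulrBl. Qed.

Lemma dot0l (z : vec) : dot 0 z = 0.
Proof. by rewrite /dot big1 // => j _; rewrite ffunE mul0r. Qed.

Lemma dot_ind (x : vec) i : dot x (ind i) = Sx x i.
Proof.
rewrite /dot /Sx [RHS]big_mkcond; apply: eq_bigr => k _; rewrite ffunE.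
by case: ifP => _; rewrite ?mulr1 ?mulr0.
Qed.

Lemma mono_T (T : vec) : dominant T -> forall a b : idx, (a <= b)%N -> T b <= T a.
Proof.
move=> dT a b ab.
have sab : sameblk setT a b by apply/sbP => i _; exact: in_setT.
move: a b ab sab; apply: sb_chain.
- by move=> a.
- by move=> a b c _ h1 h2; apply: le_trans h1.
- by move=> x _; have := dT x; rewrite dot_alpha subr_ge0.
Qed.

End Alg.

Lemma dmin_le (K : realFieldType) n (T : vec K n) (i : 'I_n) : dmin T <= dot (alpha K i) T.
Proof.
case: n T i => [|m] T i; first by case: i.
exact: bigmin_le.
Qed.

Section Main.
Variable K : realFieldType.
Variable n : nat.
Local Notation idx := ('I_n.+1).
Local Notation vec := (vec K n).
Variables (P R Q : {set 'I_n}) (w u w' : {perm idx}) (r : idx -> nat).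
Hypotheses (hW : Wdc R P w) (hu : WdcR R Q (paraw R P (w^-1)%g) u)
  (hw' : forall a, w' a = u (w a)) (QR : Q \subset R).
Hypotheses (rP : forall a b, sameblk P a b -> r a = r b) (rpos : forall a, (0 < r a)%N)
  (rle : forall a, (r a <= n.+1)%N).
Local Notation Rw := (paraw R P (w^-1)%g).
Local Notation Pw := (paraw P R w).
Local Notation Sw := (paraw P Q w').
Local Notation mu := (wact w' (nu K r (paraw P Q w') (paraw P R w))).

Definition cond (a b : idx) := [&& (a < b)%N, sameblk Pw a b & ~~ sameblk Sw a b].

Lemma cond_r a b : cond a b -> r a = r b.
Proof. by case/and3P => _ h _; apply: rP; apply: sb_mono h; exact: Pw_subP. Qed.

Lemma sum_mu (X : pred idx) : \sum_(k | X k) mu k =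
  - (2^-1 * \sum_a \sum_(b | cond a b) ((X (w' a))%:R - (X (w' b))%:R) / (r a)%:R).
Proof.
rewrite [LHS]big_mkcond /=.
have -> : \sum_k (if X k then mu k else 0) = \sum_k (X k)%:R * mu k.
  by apply: eq_bigr => k _; case: (X k); rewrite ?mul1r ?mul0r.
rewrite (reindex_inj (@perm_inj _ w')) /=.
under eq_bigr do rewrite ffunE permK ffunE ffunE.
pose F j := (X (w' j))%:R / (r j)%:R : K.
have e : forall j, (X (w' j))%:R * (- (2^-1 * (\sum_a \sum_(b | cond a b) (eb K a - eb K b)) j) / (r j)%:R)
   = - (2^-1 * (F j * (\sum_a \sum_(b | cond a b) (eb K a - eb K b)) j)).
  by move=> j; rewrite /F; ring.
under eq_bigr do rewrite e.
rewrite sumrN -mulr_sumr pairsum; congr (- (_ * _)).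
apply: eq_bigr => a _; apply: eq_bigr => b hab.
by rewrite /F (cond_r hab) mulrBl.
Qed.


Let winc := w'_inc hW hu hw' QR.
Let wR := w'_R hu hw'.
Let wstep := w'_step hW hu hw' QR.

Definition mono (X : pred idx) := forall a b, cond a b -> X (w' b) -> X (w' a).

Lemma term_ge0 (X : pred idx) a b : mono X -> cond a b ->
  0 <= ((X (w' a))%:R - (X (w' b))%:R) / (r a)%:R :> K.
Proof.
move=> m hab; apply: divr_ge0; last exact: ler0n.
have := m a b hab.
case: (X (w' a)); case: (X (w' b)) => //= H; rewrite ?subrr ?subr0 //.
by have := H isT.
Qed.

Lemma inner_ge0 (X : pred idx) a : mono X ->
  0 <= \sum_(b | cond a b) ((X (w' a))%:R - (X (w' b))%:R) / (r a)%:R :> K.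
Proof. by move=> m; apply: sumr_ge0 => b hb; apply: term_ge0. Qed.

Lemma sum_le0 (X : pred idx) : mono X -> \sum_(k | X k) mu k <= 0.
Proof.
move=> m; rewrite sum_mu oppr_le0; apply: mulr_ge0; first by rewrite invr_ge0 ler0n.
by apply: sumr_ge0 => a _; apply: inner_ge0.
Qed.

Lemma sum_eq0 (X : pred idx) : (forall a b, cond a b -> X (w' a) = X (w' b)) ->
  \sum_(k | X k) mu k = 0.
Proof.
move=> h; rewrite sum_mu big1 ?mulr0 ?oppr0 // => a _; rewrite big1 // => b hab.
by rewrite (h a b hab) subrr mul0r.
Qed.

Lemma sum_eq0_inv (X : pred idx) : mono X -> \sum_(k | X k) mu k = 0 ->
  forall a b, cond a b -> X (w' a) = X (w' b).
Proof.
move=> m; rewrite sum_mu => /eqP; rewrite oppr_eq0 mulf_eq0 invr_eq0 pnatr_eq0 /= => /eqP h0 a b hab.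
have h1 := @psumr_eq0P _ _ _ _ (fun a _ => inner_ge0 a m) h0 a isT.
have h2 := @psumr_eq0P _ _ _ _ (fun b hb => term_ge0 m hb) h1 b hab.
move/eqP: h2; rewrite mulf_eq0 invr_eq0 pnatr_eq0 eqn0Ngt rpos orbF subr_eq0 eqr_nat.
by case: (X (w' a)); case: (X (w' b)).
Qed.

Lemma sum_neg (X : pred idx) a b : mono X -> cond a b -> X (w' a) -> ~~ X (w' b) ->
  \sum_(k | X k) mu k <= - (2^-1 / (n.+1)%:R).
Proof.
move=> m hab ha hb; rewrite sum_mu lerN2 ler_pM2l ?invr_gt0 ?ltr0n //.
apply: (@le_trans _ _ (\sum_(b | cond a b) ((X (w' a))%:R - (X (w' b))%:R) / (r a)%:R)).
  rewrite (bigD1 b hab) /= -[X in X <= _]addr0 lerD //.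
    by rewrite ha (negbTE hb) subr0 mul1r lef_pV2 ?posrE ?ltr0n ?rpos // ler_nat.
  by apply: sumr_ge0 => c /andP [hc _]; exact: (term_ge0 m hc).
rewrite [X in _ <= X](bigD1 a) //= -[X in X <= _]addr0 lerD //.
by apply: sumr_ge0 => c _; apply: inner_ge0.
Qed.

Lemma mono_pref (i : 'I_n) : mono (fun k : idx => (k <= i)%N).
Proof.
move=> a b /and3P [ab sab _] hb; have := winc (ltnW ab) sab; lia.
Qed.

Lemma Sx_le0 i : Sx mu i <= 0.
Proof. rewrite /Sx; exact: (sum_le0 (@mono_pref i)). Qed.

Lemma Sx_notR (i : 'I_n) : i \notin R -> Sx mu i = 0.
Proof.
move=> iR; rewrite /Sx; apply: (@sum_eq0 (fun k : idx => (k <= i)%N)) => a b /and3P [ab sab _].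
have le := winc (ltnW ab) sab.
have := wR sab => /sbP sR.
apply/idP/idP => h; last lia.
case: (leqP (w' b) i) => // h2.
by move: iR; rewrite sR //; lia.
Qed.

Lemma sum_all : \sum_k mu k = 0.
Proof. exact: (@sum_eq0 xpredT). Qed.

Lemma avgR_mu j : avg R mu j = 0.
Proof.
rewrite avgE sum_eq0 ?mul0r // => a b /and3P [_ sab _].
have sR := wR sab.
apply/idP/idP => h; [exact: sbT h sR | exact: sbT h (sbS sR)].
Qed.

Lemma proj_mu : proj Q R mu = avgv Q mu.
Proof.
rewrite proj_eq; have -> : avgv R mu = 0 by apply/ffunP => j; rewrite !ffunE avgR_mu.
by rewrite subr0.
Qed.

Lemma dot_proj (y : vec) : dot (proj Q R mu) y = dot mu (avgv Q y).
Proof. by rewrite proj_mu dot_avg. Qed.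

Lemma key j : j \in Pw -> j \notin Sw ->
  exists i : 'I_n, i \notin Q /\ Sx mu i <= - (2^-1 / (n.+1)%:R).
Proof.
move=> jP jS.
have lt := wstep jP.
have jP' : j \in P by move: jP; rewrite inPw => /andP [].
have nQ : ~~ sameblk Q (w' (lo j)) (w' (hi j)) by move: jS; rewrite inSw jP'.
move: nQ; rewrite /sameblk negb_forall => /existsP [i]; rewrite negb_imply => /andP [hi1 hi2].
exists i; split => //.
apply: (sum_neg (@mono_pref i) (a := lo j) (b := hi j)).
- by rewrite /cond val_lo val_hi ltnSn !sb_lohi jP jS.
- rewrite /=; lia.
- rewrite /=; lia.
Qed.


Let Swsub := Sw_sub hu hw' QR.

Section Coweight.
Variables (varpi : vec) (i : 'I_n).
Hypotheses (iRQ : i \in R :\: Q) (hQ : forall a b, sameblk Q a b -> varpi a = varpi b)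
  (hR : forall a, \sum_(b | sameblk R a b) varpi b = 0)
  (hd : forall j, j \in R :\: Q -> dot (alpha K j) varpi = (i == j)%:R).

Lemma iQ : i \notin Q.
Proof. by move: iRQ; rewrite inE => /andP []. Qed.

Lemma cw_dot : dot mu varpi = Sx mu i.
Proof.
rewrite abel sum_all mul0r addr0 (bigD1 i) //= big1 ?addr0.
- by rewrite -dot_alpha hd // eqxx mulr1.
- move=> k ki; case: (boolP (k \in Q)) => kQ.
  + by rewrite (@hQ (lo k) (hi k)) ?subrr ?mulr0 // sb_lohi.
  + case: (boolP (k \in R)) => kR.
    * by rewrite -dot_alpha hd ?inE ?kQ ?kR // eq_sym (negbTE ki) mulr0.
    * by rewrite Sx_notR // mul0r.
Qed.

Lemma ord_between (x y : 'I_n) : ((x <= y) && (y < x.+1))%N = (x == y).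
Proof. by rewrite ltnS -eqn_leq. Qed.

Lemma cw_tel : forall x y : idx, (x <= y)%N -> sameblk R x y ->
  varpi x - varpi y = ((x <= i) && (i < y))%N%:R.
Proof.
apply: sb_chain.
- by move=> a; rewrite subrr; case: leqP.
- move=> a b c /andP [ab bc] e1 e2.
  have -> : varpi a - varpi c = (varpi a - varpi b) + (varpi b - varpi c) by rewrite addrA subrK.
  rewrite e1 e2 -natrD; congr (_%:R).
  case: (leqP b i) => h1; case: (leqP a i) => h2; case: (leqP c i) => h3 //=; lia.
- move=> x xR; rewrite val_lo val_hi ord_between.
  case: (boolP (x \in Q)) => xQ.
  + rewrite (@hQ (lo x) (hi x)) ?sb_lohi // subrr; case: eqP => // e.
    by move: iQ; rewrite -e xQ.
  + by rewrite -dot_alpha hd ?inE ?xQ ?xR // eq_sym.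
Qed.

Lemma cw_sum : \sum_j varpi j = 0.
Proof.
pose one : vec := [ffun _ => 1].
have e := dot_avg R varpi one.
have e1 : avgv R one = one.
  by apply/ffunP => j; rewrite !ffunE; apply: avg_const => l _; rewrite ffunE.
rewrite e1 in e.
have L : dot (avgv R varpi) one = 0 by rewrite /dot big1 // => j _; rewrite !ffunE avgE hR !mul0r.
have Rr : dot varpi one = \sum_j varpi j by rewrite /dot; under eq_bigr do rewrite ffunE mulr1.
by rewrite -Rr -e L.
Qed.

Lemma cw_aG : Sx mu i = 0 <-> in_w_aG Pw w' varpi.
Proof.
split.
- move=> h0; have H := sum_eq0_inv (@mono_pref i) h0.
  exists [ffun j => varpi (w' j)]; [split|].
  + suff hle : forall a b : idx, (a <= b)%N -> sameblk Pw a b -> varpi (w' a) = varpi (w' b).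
      move=> a b sab; rewrite !ffunE; case: (leqP a b) => ab; first exact: hle.
      by symmetry; apply: hle; [exact: ltnW | rewrite sbC].
    move=> a b ab sab; have le := winc ab sab; have sR := wR sab.
    apply/eqP; rewrite -subr_eq0 (cw_tel le sR) pnatr_eq0 eqb0; apply/negP => /andP [h1 h2].
    case: (boolP (sameblk Sw a b)) => hS.
    * have /sbP sQ := Sw_Q hS.
      by move: iQ; rewrite sQ //; lia.
    * have ab' : (a < b)%N.
        rewrite ltn_neqAle ab andbT; apply/negP => /eqP e.
        have e' : a = b by apply: val_inj.
        by move: hS; rewrite e' sbxx.
      have := H a b; rewrite /cond ab' sab hS => /(_ isT) /=; lia.
  + transitivity (\sum_j varpi j); last exact: cw_sum.
    rewrite [RHS](reindex_inj (@perm_inj _ w')); apply: eq_bigr => j _; by rewrite ffunE.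
  + by apply/ffunP => j; rewrite !ffunE permKV.
- case=> y [hy _] e.
  apply: (@sum_eq0 (fun k : idx => (k <= i)%N)) => a b hab.
  have ey : forall c, varpi (w' c) = y c by move=> c; rewrite e ffunE permK.
  case/and3P: hab => ab sab _; have le := winc (ltnW ab) sab; have sR := wR sab.
  have := cw_tel le sR; rewrite !ey (hy a b sab) subrr => /esym /eqP; rewrite pnatr_eq0 eqb0 => h.
  move: h; case: (leqP (w' a) i) => h1; case: (leqP (w' b) i) => h2 //=; lia.
Qed.

End Coweight.

Lemma nu_eq0 : Pw = Sw -> mu = 0.
Proof.
move=> e; rewrite -e; apply/ffunP => j; rewrite !ffunE big1 ?ffunE ?mulr0 ?oppr0 ?mul0r //.
move=> a _; rewrite big1 // => b /and3P [_ h1 h2].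
by rewrite h1 in h2.
Qed.

Lemma a_to_b : Pw = Sw -> proj Q R mu = 0.
Proof.
move=> e; rewrite (nu_eq0 e) proj_eq; apply/ffunP => j; rewrite !ffunE.
have z : forall (D : {set 'I_n}) j0, avg D (0 : vec) j0 = 0.
  by move=> D j0; apply: avg_const => l _; rewrite ffunE.
by rewrite !z subrr.
Qed.

Lemma avg_ind (i : 'I_n) : i \notin Q -> avgv Q (ind K i) = ind K i.
Proof.
move=> iQ; apply/ffunP => j; rewrite ffunE; apply: avg_const => l /sbP h; rewrite !ffunE.
congr (_%:R).
case: (leqP l i) => h1; case: (leqP j i) => h2 //; by move: iQ; rewrite h //; lia.
Qed.

Lemma b_to_a : proj Q R mu = 0 -> Pw = Sw.
Proof.
move=> h0; apply/eqP; rewrite eqEsubset Swsub andbT.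
apply/subsetP => j jP; apply/negPn/negP => jS.
have [i [iQ hSi]] := key jP jS.
have : dot (proj Q R mu) (ind K i) = Sx mu i by rewrite dot_proj avg_ind // dot_ind.
rewrite h0 dot0l => e; move: hSi; rewrite -e oppr_ge0 leNgt divr_gt0 ?invr_gt0 ?ltr0n //.
Qed.

Lemma a_to_c : Pw = Sw -> rightmul (WRSQ R Rw Q) w w'.
Proof.
move=> e; exists u => //; rewrite /WRSQ hu /=.
apply/forallP => a; apply/forallP => b; apply/implyP; move: a b.
apply: sb_chain_sym.
- by move=> a; exact: sbxx.
- by move=> a b; exact: sbS.
- by move=> a b c; exact: sbT.
- move=> x xR; have [j [jP e1 e2]] := Rw_Pw hW hu QR xR.
  have : j \in Sw by rewrite -e.
  by rewrite inSw !hw' e1 e2 => /andP [].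
Qed.

Lemma c_to_a : rightmul (WRSQ R Rw Q) w w' -> Pw = Sw.
Proof.
case=> u2 hu2 e2; apply/eqP; rewrite eqEsubset Swsub andbT; apply/subsetP => j jP.
have [x [xR e1 e3]] := Pw_Rw hW hu QR jP.
move: hu2; rewrite /WRSQ => /andP [_ /forallP /(_ (lo x)) /forallP /(_ (hi x)) /implyP].
rewrite sb_lohi => /(_ xR); rewrite e1 e3 -!e2 => hQ'.
by rewrite inSw hQ' andbT; move: jP; rewrite inPw => /andP [].
Qed.

Lemma avg_lo_ge (T : vec) (k : 'I_n) : dominant T -> k \notin Q -> T (lo k) <= avg Q T (lo k).
Proof.
move=> dT kQ; apply: avg_ge => l /sbP h; apply: mono_T => //.
case: (leqP l (lo k)) => // hl; by move: kQ; rewrite h // val_lo; move: hl; rewrite val_lo; lia.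
Qed.

Lemma avg_hi_le (T : vec) (k : 'I_n) : dominant T -> k \notin Q -> avg Q T (hi k) <= T (hi k).
Proof.
move=> dT kQ; apply: avg_le => l /sbP h; apply: mono_T => //.
case: (leqP (hi k) l) => // hl; by move: kQ; rewrite h // val_hi; move: hl; rewrite val_hi; lia.
Qed.

Lemma part3 (T : vec) : dominant T -> ~ rightmul (WRSQ R Rw Q) w w' ->
  dot (proj Q R mu) T <= - (2^-1 / (n.+1)%:R) * dmin T.
Proof.
move=> dT nW.
have nE : Pw != Sw by apply/eqP => e; apply: nW; exact: a_to_c.
have [j jP jS] : exists2 j, j \in Pw & j \notin Sw.
  by move: nE; rewrite eqEsubset Swsub andbT => /subsetPn [j jP jS]; exists j.
have [i [iQ hSi]] := key jP jS.
have dge : forall k : 'I_n, 0 <= avgv Q T (lo k) - avgv Q T (hi k).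
  move=> k; rewrite !ffunE subr_ge0; case: (boolP (k \in Q)) => kQ.
    by rewrite (@avg_eq _ _ _ _ (lo k) (hi k)) ?sb_lohi.
  apply: le_trans (avg_lo_ge dT kQ); apply: le_trans (avg_hi_le dT kQ) _.
  by apply: mono_T => //; rewrite val_lo val_hi.
have dgi : dot (alpha K i) T <= avgv Q T (lo i) - avgv Q T (hi i).
  by rewrite dot_alpha !ffunE; apply: lerB; [exact: avg_lo_ge | exact: avg_hi_le].
rewrite dot_proj abel sum_all mul0r addr0 (bigD1 i) //=.
have rest : \sum_(k < n | k != i) Sx mu k * (avgv Q T (lo k) - avgv Q T (hi k)) <= 0.
  by apply: sumr_le0 => k _; apply: mulr_le0_ge0; [exact: Sx_le0 | exact: dge].
apply: le_trans (lerD (le_refl _) rest) _; rewrite addr0.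
apply: le_trans (ler_wpM2r (dge i) hSi) _.
apply: ler_wnM2l; first by rewrite oppr_le0 divr_ge0 ?invr_ge0 ?ler0n.
exact: le_trans (dmin_le T i) dgi.
Qed.

End Main.

Unset Implicit Arguments.

Theorem mainTheorem11 (K : realFieldType) (n : nat)
    (P Dpi : {set 'I_n}) (r : 'I_n.+1 -> nat)
    (R : {set 'I_n}) (w : {perm 'I_n.+1}) :
  disc_data P Dpi r -> Wdc R P w ->
  let Rw := paraw R P (w^-1)%g in
  let Pw := paraw P R w in
  (forall (Q : {set 'I_n}) (w' : {perm 'I_n.+1}),
     Q \subset R -> rightmul (WdcR R Q Rw) w w' -> Dpi \subset paraw P Q w' ->
     let mu : vec K n := wact w' (nu K r (paraw P Q w') Pw) in
     (forall varpi, is_coweight Q R varpi ->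
        dot mu varpi <= 0 /\ (dot mu varpi = 0 <-> in_w_aG Pw w' varpi))
     /\ ((Pw = paraw P Q w' <-> proj Q R mu = 0)
         /\ (proj Q R mu = 0 <-> rightmul (WRSQ R Rw Q) w w')))
  /\
  (exists2 c1 : K, 0 < c1 &
     forall (T : vec K n), dominant T ->
     forall (Q : {set 'I_n}) (w' : {perm 'I_n.+1}),
       Q \subset R -> rightmul (WdcR R Q Rw) w w' -> ~ rightmul (WRSQ R Rw Q) w w' ->
       Dpi \subset paraw P Q w' ->
       dot (proj Q R (wact w' (nu K r (paraw P Q w') Pw))) T <= - c1 * dmin T).
Proof.
move=> [DP rP rcard] hW Rw Pw; rewrite {}/Rw {}/Pw.
have rpos : forall a, (0 < r a)%N.
  by move=> a; rewrite -rcard card_gt0; apply/set0Pn; exists a; rewrite inE sbxx.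
have rle : forall a, (r a <= n.+1)%N.
  by move=> a; rewrite -rcard; apply: leq_trans (max_card _) _; rewrite card_ord.
split.
- move=> Q w' QR [u hu hw'] _.
  split; [move=> varpi [i iRQ [[hQ hR] hd]] | split].
  + rewrite (cw_dot hW hu hw' QR rP iRQ hQ hd); split.
      exact: (Sx_le0 K hW hu hw' QR rP i).
    exact: (cw_aG hW hu hw' QR rP rpos iRQ hQ hR hd).
  + split; [exact: a_to_b | exact: (b_to_a hW hu hw' QR rP rpos rle)].
  + split => h.
      by apply: (a_to_c hW hu hw' QR); exact: (b_to_a hW hu hw' QR rP rpos rle h).
    by apply: a_to_b; exact: (c_to_a hW hu hw' QR h).
- exists (2^-1 / (n.+1)%:R); first by rewrite divr_gt0 ?invr_gt0 ?ltr0n.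
  move=> T dT Q w' QR [u hu hw'] nW _.
  exact: (part3 hW hu hw' QR rP rpos rle dT nW).
Qed.
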